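(* Let $\mathcal{M}=(E,\mathcal{C})$ be a loopless oriented matroid with $E=\{e_1,\dots,e_m\}$ ordered $e_1\prec\cdots\prec e_m$, and let $1\le k\le m$. The map $\psi_k:\mathscr{N}_{k-1}\to\mathscr{N}_k$ is surjective: for every $(N_k,A_k)\in\mathscr{N}_k$ there is $(N_{k-1},A_{k-1})\in\mathscr{N}_{k-1}$ with $\psi_k(N_{k-1},A_{k-1})=(N_k,A_k)$.
   Context: A signed subset of a finite set $E$ is a pair $X=(X^+,X^-)$ of disjoint subsets; support $\underline{X}=X^+\cup X^-$, $-X=(X^-,X^+)$. An oriented matroid $\mathcal{M}=(E,\mathcal{C})$: a collection $\mathcal{C}$ of signed subsets with (C1) empty signed set not in $\mathcal{C}$; (C2) $\mathcal{C}=-\mathcal{C}$; (C3) $\underline{X}\subseteq\underline{Y}$ for $X,Y\in\mathcal{C}$ implies $X=\pm Y$; (C4) for $X,Y\in\mathcal{C}$, $X\neq\pm Y$, $e\in X^+\cap Y^-$ there is $Z\in\mathcal{C}$ with $Z^+\subseteq X^+\cup Y^+-\{e\}$, $Z^-\subseteq X^-\cup Y^--\{e\}$. Underlying matroid $\underline{\mathcal{M}}$: circuits $\underline{X}$, $X\in\mathcal{C}$; loopless means no one-element circuit. Positive circuit: $X^-=\emptyset$; acyclic: no positive circuit. Reorientation ${}_{-A}\mathcal{M}$ ($A\subseteq E$): signed circuits ${}_{-A}X=((X^+-A)\cup(X^-\cap A),(X^--A)\cup(X^+\cap A))$; ${}_{-e}={}_{-\{e\}}$. Deletion $\mathcal{M}\backslash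 X$ on $E-X$: signed circuits $Y\in\mathcal{C}$ with $\underline{Y}\subseteq E-X$. Contraction $\mathcal{M}/X$ on $E-X$: support-minimal nonempty members of $\{(Y^+-X,Y^--X):Y\in\mathcal{C},\underline{Y}-X\ne\emptyset\}$. Broken circuit: circuit of $\underline{\mathcal{M}}$ minus its $\prec$-maximal element; $\mathrm{NBC}(\underline{\mathcal{M}})$: subsets of $E$ containing no broken circuit. $E_k=\{e_1,\dots,e_k\}$; for $N_k\subseteq E_k$, $N_k^c=E_k-N_k$. $\mathscr{N}_k$ is the set of pairs $(N_k,A_k)$ with $N_k\subseteq E_k$, $A_k\subseteq E-E_k$, $N_k\in\mathrm{NBC}(\underline{\mathcal{M}})$, and $\mathcal{M}_k:={}_{-A_k}(\mathcal{M}\backslash N_k^c/N_k)$ acyclic. For $(N_{k-1},A_{k-1})\in\mathscr{N}_{k-1}$ with $\mathcal{M}_{k-1}={}_{-A_{k-1}}(\mathcal{M}\backslash N_{k-1}^c/N_{k-1})$: $\psi_k(N_{k-1},A_{k-1})=(N_{k-1}\cup\{e_k\},A_{k-1})$ if $e_k\notin A_{k-1}$ and ${}_{-e_k}\mathcal{M}_{k-1}$ is acyclic; $=(N_{k-1},A_{k-1})$ if $e_k\notin A_{k-1}$ and ${}_{-e_k}\mathcal{M}_{k-1}$ is not acyclic; $=(N_{k-1},A_{k-1}-\{e_k\})$ if $e_k\in A_{k-1}$. *)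

(* Defs.v *)
From mathcomp Require Import all_boot.
Set Implicit Arguments.
Unset Strict Implicit.
Unset Printing Implicit Defensive.

(* Ground set E = {e_1,...,e_m} is modelled as 'I_m, with e_i = the ordinal
   i-1, and the order e_1 < ... < e_m is the natural order of ordinals. *)

(* A signed subset X = (X^+, X^-) of 'I_m. *)
Definition sset (m : nat) := ({set 'I_m} * {set 'I_m})%type.

Section OM.
Variable m : nat.
Implicit Types (X Y Z : sset m) (C : {set sset m}) (A S N : {set 'I_m}).

Definition supp X : {set 'I_m} := X.1 :|: X.2.
Definition sneg X : sset m := (X.2, X.1).

Definition oriented_matroid C : Prop :=
  [/\ (forall X, X \in C -> X.1 :&: X.2 = set0),
      (set0, set0) \notin C,
      (forall X, X \in C -> sneg X \in C),
      (forall X Y, X \in C -> Y \in C -> supp X \subset supp Y ->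
                 X = Y \/ X = sneg Y) &
      (forall X Y e, X \in C -> Y \in C -> X <> Y -> X <> sneg Y ->
                 e \in X.1 :&: Y.2 ->
                 exists2 Z, Z \in C &
                   Z.1 \subset (X.1 :|: Y.1) :\ e /\
                   Z.2 \subset (X.2 :|: Y.2) :\ e)].

Definition loopless C : Prop := forall X, X \in C -> #|supp X| <> 1.

Definition acyclic C : bool := [forall X in C, X.2 != set0].

Definition reor A X : sset m :=
  ((X.1 :\: A) :|: (X.2 :&: A), (X.2 :\: A) :|: (X.1 :&: A)).
Definition reorient A C : {set sset m} := [set reor A X | X in C].

Definition deletion D C : {set sset m} :=
  [set Y in C | supp Y :&: D == set0].

Definition contr_cands S C : {set sset m} :=
  [set ((Y.1 :\: S), (Y.2 :\: S)) | Y in [set Y in C | supp Y :\: S != set0]].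
Definition contraction S C : {set sset m} :=
  [set Z in contr_cands S C |
     [forall W in contr_cands S C, ~~ (supp W \proper supp Z)]].

Definition NBC C N : Prop :=
  forall X x, X \in C -> x \in supp X ->
    (forall y, y \in supp X -> (y <= x)%N) ->
    ~ (supp X :\ x \subset N).

Definition Ek (k : nat) : {set 'I_m} := [set i : 'I_m | (i < k)%N].

(* M_k = _{-A}(M \ N^c / N), with N^c = E_k - N. *)
Definition minorM C k N A : {set sset m} :=
  reorient A (contraction N (deletion (Ek k :\: N) C)).

Definition Nscr C k N A : Prop :=
  [/\ N \subset Ek k, A \subset ~: Ek k, NBC C N & acyclic (minorM C k N A)].

(* psi_k, where e_k is the ordinal j (so k = j+1), applied to
   (N_{k-1}, A_{k-1}). *)
Definition psi C (j : 'I_m) (p : {set 'I_m} * {set 'I_m}) :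
    {set 'I_m} * {set 'I_m} :=
  let: (N, A) := p in
  if j \notin A then
    (if acyclic (reorient [set j] (minorM C j N A)) then (j |: N, A)
     else (N, A))
  else (N, A :\ j).

End OM.

(* Main.v *)
Require Import Defs.
From mathcomp Require Import all_boot.
Set Implicit Arguments. Unset Strict Implicit. Unset Printing Implicit Defensive.

Lemma reor_sneg m (A : {set 'I_m}) X : reor A (sneg X) = sneg (reor A X).
Proof. by []. Qed.

Lemma supp_reor m (A : {set 'I_m}) X : supp (reor A X) = supp X.
Proof.
apply/setP => x; rewrite /supp /reor !inE.
by case: (x \in X.1); case: (x \in X.2); case: (x \in A).
Qed.

Lemma reor_contr2 m (A N : {set 'I_m}) (Y : sset m) :
  (reor A (Y.1 :\: N, Y.2 :\: N)).2 = (reor A Y).2 :\: N.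
Proof.
apply/setP => x; rewrite /reor !inE /=.
by case: (x \in Y.1); case: (x \in Y.2); case: (x \in A); case: (x \in N).
Qed.

Lemma reorientK m (j : 'I_m) (A : {set 'I_m}) (S : {set sset m}) : j \notin A ->
  reorient [set j] (reorient A S) = reorient (j |: A) S.
Proof.
move=> hj; rewrite /reorient -imset_comp; apply: eq_imset => X /=.
rewrite /reor /=; congr pair; apply/setP => x; rewrite !inE;
  (case: eqP => [->|_]; [rewrite (negbTE hj) |]);
  by case: (_ \in X.1); case: (_ \in X.2); try case: (x \in A).
Qed.

Lemma acyclicPn m (S : {set sset m}) :
  reflect (exists2 X, X \in S & X.2 = set0) (~~ acyclic S).
Proof.
apply: (iffP idP).
  rewrite /acyclic => /forallPn [X]; rewrite negb_imply negbK => /andP [h1 /eqP h2].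
  by exists X.
move=> [X h1 h2]; rewrite /acyclic; apply/forallPn; exists X; by rewrite h1 h2 eqxx.
Qed.

Definition goodW m (C : {set sset m}) (D N A : {set 'I_m}) (W : sset m) :=
  [/\ W \in C, supp W :&: D = set0, supp W :\: N != set0 & (reor A W).2 :\: N = set0].

Lemma easy_dir m (C : {set sset m}) D N A :
  ~~ acyclic (reorient A (contraction N (deletion D C))) -> exists W, goodW C D N A W.
Proof.
move/acyclicPn => [X /imsetP [Z hZ ->] h2].
move: hZ; rewrite inE => /andP [/imsetP [Y hY hZ] _]; subst Z.
move: hY; rewrite !inE => /andP [/andP [hYC /eqP hD] hN].
exists Y; split; [done|done| |].
- by move: hN; rewrite /supp /= => h; exact: h.
- by rewrite -reor_contr2.
Qed.

Lemma notin_I0 (T : finType) (A B : {set T}) x : A :&: B = set0 -> x \in A -> x \notin B.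
Proof.
move=> h xa; apply/negP => xb.
have : x \in A :&: B by rewrite inE xa xb.
by rewrite h inE.
Qed.

Lemma I0_of (T : finType) (A B : {set T}) : (forall x, x \in A -> x \notin B) -> A :&: B = set0.
Proof.
move=> h; apply/setP => x; rewrite !inE.
by case xa: (x \in A) => //=; apply/negbTE/h.
Qed.

Lemma elimA m (C : {set sset m}) (A : {set 'I_m}) X Y e :
  oriented_matroid C -> X \in C -> Y \in C -> X <> Y -> X <> sneg Y ->
  e \in (reor A X).1 -> e \in (reor A Y).2 ->
  exists2 Z, Z \in C & Z.1 \subset (X.1 :|: Y.1) :\ e /\ Z.2 \subset (X.2 :|: Y.2) :\ e.
Proof.
case=> _ _ C2 _ C4 hX hY nXY nXnY.
rewrite /reor !inE /=.
case eA: (e \in A) => he1 he2; rewrite /= ?andbT ?andbF ?orbF ?andTb ?andFb ?orFb in he1 he2.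
- have [|||Z hZ [Z1 Z2]] := C4 (sneg X) (sneg Y) e (C2 _ hX) (C2 _ hY).
  + by move=> h; apply: nXY; case: X Y h {hX hY nXnY he1 he2} => [? ?] [? ?] [-> ->].
  + by move=> h; apply: nXnY; case: X Y h {hX hY nXY he1 he2} => [? ?] [? ?] [-> ->].
  + by rewrite inE /=; apply/andP.
  exists (sneg Z); first exact: C2.
  by rewrite /sneg /=; split.
- have [|Z hZ [Z1 Z2]] := C4 X Y e hX hY nXY nXnY.
  + by rewrite inE; apply/andP.
  by exists Z.
Qed.

Lemma elim_props m (A : {set 'I_m}) (X Y Z : sset m) e :
  Z.1 \subset (X.1 :|: Y.1) :\ e -> Z.2 \subset (X.2 :|: Y.2) :\ e ->
  (forall x, x \in (reor A Z).2 -> x != e /\ (x \in (reor A X).2 \/ x \in (reor A Y).2)) /\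
  (forall x, x \in supp Z -> x != e /\ (x \in supp X \/ x \in supp Y)).
Proof.
move=> /subsetP H1 /subsetP H2; split => x; have := H1 x; have := H2 x;
  rewrite /reor /supp !inE /=;
  case: (x \in Z.1); case: (x \in Z.2); case: (x == e); case: (x \in X.1);
  case: (x \in X.2); case: (x \in Y.1); case: (x \in Y.2); case: (x \in A) => //=;
  intuition.
Qed.

Lemma supp_sneg m (Y : sset m) : supp (sneg Y) = supp Y.
Proof. by rewrite /supp /sneg setUC. Qed.

Lemma suppN0 m (C : {set sset m}) (N : {set 'I_m}) Y :
  (forall X, X \in C -> ~ supp X \subset N) -> Y \in C -> supp Y :\: N != set0.
Proof.
move=> noN hY; apply/negP => /eqP h; apply: (noN Y hY).
by rewrite -setD_eq0 h.
Qed.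

Lemma hard_dir m (C : {set sset m}) (D N A : {set 'I_m}) W :
  oriented_matroid C -> (forall X, X \in C -> ~ supp X \subset N) ->
  goodW C D N A W -> ~~ acyclic (reorient A (contraction N (deletion D C))).
Proof.
move=> om noN.
suff: forall n W, #|supp W :\: N| <= n -> goodW C D N A W ->
   ~~ acyclic (reorient A (contraction N (deletion D C))).
  by move=> H; apply: H.
elim=> [|n IH] {}W.
  by rewrite leqn0 cards_eq0 => h [_ _ h' _]; rewrite h in h'.
move=> hc gW; have [hW hWD hWN hWA] := gW.
pose Z := (W.1 :\: N, W.2 :\: N).
have hZc : Z \in contr_cands N (deletion D C).
  apply/imsetP; exists W => //; rewrite !inE hW hWD eqxx /=.
  by move: hWN; rewrite /supp setDUl.
have suppZ : supp Z = supp W :\: N by rewrite /supp /= setDUl.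
case hmin: [forall W' in contr_cands N (deletion D C), ~~ (supp W' \proper supp Z)].
  apply/acyclicPn; exists (reor A Z).
    by apply/imsetP; exists Z => //; rewrite inE hZc hmin.
  by rewrite reor_contr2.
move/negbT: hmin => /forallPn [W'] /=; rewrite negb_imply negbK => /andP [hW' hpr].
case/imsetP: hW' => Y0; rewrite !inE => /andP [/andP [hY0 /eqP hY0D] _] eW'.
have suppW' : supp W' = supp Y0 :\: N by rewrite eW' /supp /= setDUl.
rewrite suppW' suppZ in hpr.
suff inner : forall t Y, #|(reor A Y).2 :\: N| <= t -> Y \in C -> supp Y :&: D = set0 ->
   supp Y :\: N \proper supp W :\: N ->
   exists2 W'', goodW C D N A W'' & #|supp W'' :\: N| < #|supp W :\: N|.
  have [W'' gW'' hlt] := inner _ Y0 (leqnn _) hY0 hY0D hpr.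
  by apply: (IH W'') => //; rewrite -ltnS; apply: leq_trans hlt hc.
elim=> [|t IHt] Y.
- rewrite leqn0 cards_eq0 => /eqP hYA hY hYD hYpr.
  exists Y; last exact: proper_card.
  by split => //; exact: suppN0 hY.
- move=> ht hY hYD hYpr.
  case: (set_0Vmem ((reor A Y).2 :\: N)) => [hYA|[e he]].
    exists Y; last exact: proper_card.
    by split => //; exact: suppN0 hY.
  move: (he); rewrite inE => /andP [eN eYA].
  have eY : e \in supp Y by rewrite -(supp_reor A) /supp inE eYA orbT.
  have [hsub _] := andP hYpr.
  have eW : e \in supp W :\: N by apply: (subsetP hsub); rewrite inE eN eY.
  have eWA : e \in (reor A W).1.
    move: eW; rewrite inE => /andP [_]; rewrite -(supp_reor A) /supp inE.
    case/orP => // h; have : e \in (reor A W).2 :\: N by rewrite inE eN h.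
    by rewrite hWA inE.
  have nWY : W <> Y by move=> h; rewrite h properxx in hYpr.
  have nWnY : W <> sneg Y by move=> h; rewrite h supp_sneg properxx in hYpr.
  have [Z' hZ' [Z1 Z2]] := elimA om hW hY nWY nWnY eWA eYA.
  have [PA PS] := elim_props A Z1 Z2.
  have [|||W'' g1 g2] := IHt Z' _ hZ'.
  + rewrite -ltnS; apply: leq_trans ht; apply: proper_card; apply/properP; split.
      apply/subsetP => x; rewrite inE => /andP [xN xZ]; rewrite inE xN /=.
      have [_ [h|h]] := PA x xZ => //; exfalso.
      have : x \in (reor A W).2 :\: N by rewrite inE xN h.
      by rewrite hWA inE.
    exists e => //; rewrite inE negb_and; apply/orP; right; apply/negP => h.
    by have [/eqP] := PA e h.
  + apply: I0_of => x xZ; have [_ [h|h]] := PS x xZ.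
      exact: notin_I0 hWD h.
    exact: notin_I0 hYD h.
  + apply/properP; split.
      apply/subsetP => x; rewrite inE => /andP [xN xZ].
      have [_ [h|h]] := PS x xZ; first by rewrite inE xN h.
      by apply: (subsetP hsub); rewrite inE xN h.
    exists e => //; rewrite inE negb_and; apply/orP; right; apply/negP => h.
    by have [/eqP] := PS e h.
  + by exists W''.
Qed.

Lemma reor_j2 m (j x : 'I_m) (A : {set 'I_m}) (W : sset m) : x != j ->
  (x \in (reor (j |: A) W).2) = (x \in (reor A W).2).
Proof. by move=> xj; rewrite /reor !inE (negbTE xj). Qed.

Lemma reor_jj m (j : 'I_m) (A : {set 'I_m}) (W : sset m) : j \notin A ->
  (j \in (reor (j |: A) W).1) = (j \in (reor A W).2).
Proof.
by move=> jA; rewrite /reor !inE eqxx (negbTE jA) /=; case: (j \in W.1); case: (j \in W.2).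
Qed.

Lemma Ek_lt m (j x : 'I_m) : x != j -> (x \in Ek m j.+1) = (x \in Ek m j).
Proof.
move=> xj; rewrite !inE ltnS leq_eqVlt.
by have -> : (val x == val j) = false by apply/negbTE.
Qed.

Lemma noN_of m (C : {set sset m}) (N : {set 'I_m}) :
  oriented_matroid C -> NBC C N -> forall X, X \in C -> ~ supp X \subset N.
Proof.
case=> _ C1 _ _ _ hN X hX hs.
have [x0 hx0] : exists x0, x0 \in supp X.
  apply/set0Pn/negP => /eqP h; move: C1; rewrite -(_ : X = (set0, set0)) ?hX //.
  case: X hX hs h => [X1 X2] /= _ _; rewrite /supp /= => h.
  by move/setP: h => h; congr pair; apply/setP => x; have := h x; rewrite !inE; case: (x \in X1); case: (x \in X2).
case: (@arg_maxnP _ x0 (mem (supp X)) val hx0) => x xin xmax.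
apply: (hN X x hX xin xmax).
by apply: subset_trans hs; apply: subsetDl.
Qed.

Lemma noNj m (C : {set sset m}) (N : {set 'I_m}) (j : 'I_m) :
  oriented_matroid C -> NBC C N -> N \subset Ek m j ->
  forall X, X \in C -> ~ supp X \subset j |: N.
Proof.
move=> om hN hNj X hX hs.
case jX: (j \in supp X).
  apply: (hN X j hX jX).
    move=> y /(subsetP hs); rewrite !inE => /orP [/eqP -> //|/(subsetP hNj)].
    by rewrite inE => /ltnW.
  apply/subsetP => y; rewrite inE => /andP [yj ys]; rewrite inE in yj.
  by have := subsetP hs y ys; rewrite !inE (negbTE yj).
apply: (noN_of om hN hX); apply/subsetP => y ys.
have := subsetP hs y ys; rewrite !inE => /orP [/eqP yj|//].
by rewrite -yj ys in jX.
Qed.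

Lemma goodW_mono m (C : {set sset m}) (D1 N1 A1 D2 N2 A2 : {set 'I_m}) W :
  goodW C D1 N1 A1 W -> (forall X, X \in C -> ~ supp X \subset N2) ->
  supp W :&: D2 = set0 ->
  (forall x, x \notin N2 -> x \in (reor A2 W).2 -> x \notin N1 /\ x \in (reor A1 W).2) ->
  goodW C D2 N2 A2 W.
Proof.
move=> [hW _ _ hA] noN hD hx; split => //; first exact: suppN0 noN hW.
apply/setP => x; rewrite [in RHS]inE; apply/negP; rewrite inE => /andP [xN xA].
have [xN1 xA1] := hx x xN xA.
have : x \in (reor A1 W).2 :\: N1 by rewrite inE xN1 xA1.
by rewrite hA inE.
Qed.

Theorem lemma2p5 (m : nat) (C : {set sset m}) (j : 'I_m) :
  oriented_matroid C -> loopless C ->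
  forall N A : {set 'I_m}, Nscr C j.+1 N A ->
  exists N' A' : {set 'I_m},
    Nscr C j N' A' /\ psi C j (N', A') = (N, A).
Proof.
move=> om _ N A [hNk hAk hNBC hac].
have noN := noN_of om hNBC.
have hardk : forall W, ~ goodW C (Ek m j.+1 :\: N) N A W.
  by move=> W gW; have := hard_dir om noN gW; rewrite /minorM in hac; rewrite hac.
have jA : j \notin A.
  by apply/negP => /(subsetP hAk); rewrite !inE ltnSn.
have hAj : A \subset ~: Ek m j.
  apply/subsetP => x /(subsetP hAk); rewrite !inE -!leqNgt; exact: ltnW.
have jEk : j \notin Ek m j by rewrite inE ltnn.
case jN: (j \in N).
- set N' := N :\ j.
  have eD : Ek m j :\: N' = Ek m j.+1 :\: N.
    apply/setP => x; rewrite !inE; case: (eqVneq x j) => [->|xj] /=.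
      by rewrite jN ltnn.
    by have := Ek_lt xj; rewrite !inE => ->.
  have hNN : N' \subset N by apply: subsetDl.
  have noN' : forall X, X \in C -> ~ supp X \subset N'.
    by move=> X hX hs; apply: (noN X hX); apply: subset_trans hs hNN.
  exists N', A; split.
    split => //.
    + apply/subsetP => x; rewrite !inE => /andP [xj xN].
      by have := subsetP hNk x xN; have := Ek_lt xj; rewrite !inE => ->.
    + by move=> X x hX hx hmax hs; apply: (hNBC X x hX hx hmax); apply: subset_trans hs hNN.
    + apply/negPn/negP => /easy_dir [W gW]; apply: (hardk W).
      apply: (goodW_mono gW noN); first by rewrite -eD; case: gW.
      move=> x xN xA; split => //; rewrite !inE negb_and xN orbT //.
  rewrite /psi (negbTE jA) reorientK //.
  have -> : acyclic (reorient (j |: A) (contraction N' (deletion (Ek m j :\: N') C))).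
    apply/negPn/negP => /easy_dir [W gW]; apply: (hardk W).
    apply: (goodW_mono gW noN); first by rewrite -eD; case: gW.
    move=> x xN xA; have xj : x != j by apply: contraNneq xN => ->.
    by split; [rewrite !inE negb_and xN orbT | rewrite reor_j2].
  by rewrite /= setD1K.
- have hNj : N \subset Ek m j.
    apply/subsetP => x xN; have := subsetP hNk x xN; rewrite -Ek_lt //.
    by apply: contraTneq xN => ->; rewrite jN.
  case hr: (acyclic (reorient [set j] (minorM C j N A))).
  + exists N, (j |: A); split.
      split => //.
      * apply/subsetP => x; rewrite !inE => /orP [/eqP ->|/(subsetP hAj)].
          by rewrite ltnn.
        by rewrite !inE.
      * by move: hr; rewrite /minorM reorientK.
    by rewrite /psi setU11 /= setU1K.
  + exists N, A; split; last by rewrite /psi (negbTE jA) /minorM hr.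
    split => //.
    apply/negPn/negP => /easy_dir [W1 gW1].
    move: hr; rewrite /minorM reorientK // => /negbT /easy_dir [W2 gW2].
    have noNj' := noNj om hNBC hNj.
    have [hW1 hW1D _ hW1A] := gW1.
    have [hW2 hW2D _ hW2A] := gW2.
    have in1 : forall A' W x, (reor A' W).2 :\: N = set0 -> x \notin N -> x \in supp W ->
        x \in (reor A' W).1.
      move=> A' W x hA' xN xs; move: xs; rewrite -(supp_reor A') /supp inE => /orP [//|h].
      have : x \in (reor A' W).2 :\: N by rewrite inE xN h.
      by rewrite hA' inE.
    have notinD : forall W x, supp W :&: (Ek m j :\: N) = set0 -> x \in supp W -> x != j ->
        x \notin Ek m j.+1 :\: N.
      move=> W x hD xs xj; have := notin_I0 hD xs; have := Ek_lt xj; rewrite !inE => ->.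
      done.
    have jW1 : j \in supp W1.
      apply/negPn/negP => jW; apply: (hardk W1); apply: (goodW_mono gW1 noN).
      - apply: I0_of => x xs; apply: (notinD _ _ hW1D xs); apply/eqP => xj; by rewrite -xj xs in jW.
      - by move=> x xN xA; split.
    have jW1A : j \in (reor A W1).1 by apply: in1; rewrite ?jN.
    have jW2 : j \in supp W2.
      apply/negPn/negP => jW; apply: (hardk W2); apply: (goodW_mono gW2 noN).
      - apply: I0_of => x xs; apply: (notinD _ _ hW2D xs); apply/eqP => xj; by rewrite -xj xs in jW.
      - move=> x xN xA; split => //.
        have xs : x \in supp W2 by rewrite -(supp_reor A) /supp inE xA orbT.
        have xj : x != j by apply/eqP => xj; by rewrite -xj xs in jW.
        by rewrite reor_j2.
    have jW2A : j \in (reor A W2).2 by rewrite -reor_jj //; apply: in1; rewrite ?jN.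
    have [e1 e1s e1n] : exists2 e1, e1 \in supp W1 & e1 \notin j |: N.
      by apply/subsetPn/negP; apply: noNj' hW1.
    move: e1n; rewrite !inE negb_or => /andP [e1j e1N].
    have nW12 : W1 <> W2.
      move=> h; have : j \in (reor A W1).2 :\: N by rewrite inE jN h jW2A.
      by rewrite hW1A inE.
    have nW1n2 : W1 <> sneg W2.
      move=> h; have := in1 _ _ _ hW1A e1N e1s; rewrite h reor_sneg /= => e1A.
      have : e1 \in (reor (j |: A) W2).2 :\: N by rewrite inE e1N reor_j2.
      by rewrite hW2A inE.
    have [Z hZ [Z1 Z2]] := elimA om hW1 hW2 nW12 nW1n2 jW1A jW2A.
    have [PA PS] := elim_props A Z1 Z2.
    apply: (hardk Z); split => //.
    + apply: I0_of => x xs; have [xj [h|h]] := PS x xs.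
        exact: notinD hW1D h xj.
      exact: notinD hW2D h xj.
    + exact: suppN0 noN hZ.
    + apply/setP => x; rewrite [in RHS]inE; apply/negP; rewrite inE => /andP [xN xZ].
      have [xj [h|h]] := PA x xZ.
        have : x \in (reor A W1).2 :\: N by rewrite inE xN h.
        by rewrite hW1A inE.
      have : x \in (reor (j |: A) W2).2 :\: N by rewrite inE xN reor_j2.
      by rewrite hW2A inE.
Qed.
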